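(* Let $G$ be a biconnected plane embedded graph whose external boundary is a simple cycle $C$, and let $f$ be a convex combination map of $G$. If $u$ is an external vertex, then $f(v)\neq f(u)$ for every vertex $v\neq u$.
   Context: Vertices on $C$ are external, others internal. A convex combination map of $G$ is a map $f$ from vertices to $\mathbb{R}^2$ such that the external vertices are mapped bijectively, in cyclic order along $C$, to the corners of a convex polygon $P$, and there are coefficients $\lambda_{uv}\ge0$, $\sum_v\lambda_{uv}=1$, $\lambda_{uv}>0$ iff ($u$ internal and $v$ a neighbour of $u$), with $f(u)=\sum_v\lambda_{uv}f(v)$ for every internal $u$. *)

(* Defs.v *)
From HB Require Import structures.
From mathcomp Require Import all_boot all_order all_algebra.
Set Implicit Arguments. Unset Strict Implicit. Unset Printing Implicit Defensive.
Import Order.TTheory GRing.Theory Num.Theory.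
Local Open Scope ring_scope.

Definition simple_graph (T : finType) (e : rel T) : Prop :=
  symmetric e /\ irreflexive e.

Definition del_vertex (T : finType) (e : rel T) (z : T) : rel T :=
  [rel x y | [&& e x y, x != z & y != z]].

Definition biconnected (T : finType) (e : rel T) : Prop :=
  (3 <= #|T|)%N /\
  (forall x y : T, connect e x y) /\
  (forall z x y : T, x != z -> y != z -> connect (del_vertex e z) x y).

Definition simple_cycle (T : finType) (e : rel T) (C : seq T) : Prop :=
  [/\ (3 <= size C)%N, uniq C & cycle e C].

Definition orient (R : numDomainType) (a b c : R * R) : R :=
  (b.1 - a.1) * (c.2 - a.2) - (b.2 - a.2) * (c.1 - a.1).

(* s lists, in cyclic order, the (pairwise distinct) corners of a convex
   polygon: every other corner lies strictly on the same side of the line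
   through two cyclically consecutive corners (either all strictly left =
   counterclockwise, or all strictly right = clockwise). *)
Definition convex_polygon_corners (R : numDomainType) (s : seq (R * R)) : Prop :=
  let k := size s in
  let p := fun i => nth (0, 0) s i in
  [/\ (3 <= k)%N, uniq s &
      (forall i j : nat, (i < k)%N -> (j < k)%N -> j != i -> j != (i.+1 %% k)%N ->
         0 < orient (p i) (p (i.+1 %% k)%N) (p j)) \/
      (forall i j : nat, (i < k)%N -> (j < k)%N -> j != i -> j != (i.+1 %% k)%N ->
         orient (p i) (p (i.+1 %% k)%N) (p j) < 0)].

(* convex combination map of the graph (T, e) with outer cycle C:
   vertices of C are external, all others internal. *)
Definition convex_combination_map (R : realFieldType) (T : finType) (e : rel T)
    (C : seq T) (f : T -> R * R) : Prop :=
  convex_polygon_corners (map f C) /\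
  exists lam : T -> T -> R,
    [/\ (forall u v, 0 <= lam u v),
        (forall u v, 0 < lam u v <-> (u \notin C /\ e u v)),
        (forall u, u \notin C -> \sum_(v : T) lam u v = 1) &
        (forall u, u \notin C ->
           f u = (\sum_(v : T) lam u v * (f v).1, \sum_(v : T) lam u v * (f v).2))].

(* Main.v *)
Require Import Defs.
From HB Require Import structures.
From mathcomp Require Import all_boot all_order all_algebra.
From Stdlib Require Import Lia.
Import Order.TTheory GRing.Theory Num.Theory.
Local Open Scope ring_scope.

Lemma zmod_aux (R : zmodType) (A B Cc D : R) : A - B - (Cc - D) = - Cc + A + (D - B).
Proof. by rewrite opprB !addrA [_ + D]addrAC [-Cc + A]addrC [LHS]addrAC [A + D - Cc]addrAC. Qed.

Lemma orient_aff (R : numDomainType) (a b : R * R) :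
  exists al be ga : R, forall c, orient a b c = al * c.1 + be * c.2 + ga.
Proof.
exists (- (b.2 - a.2)), (b.1 - a.1), ((b.2 - a.2) * a.1 - (b.1 - a.1) * a.2) => c.
rewrite /orient !mulrBr mulNr.
by rewrite zmod_aux addrAC.
Qed.

Lemma aff_comb (R : numDomainType) (T : finType) (lam : T -> R) (x : T -> R * R) al be ga :
  \sum_v lam v = 1 ->
  al * (\sum_v lam v * (x v).1) + be * (\sum_v lam v * (x v).2) + ga =
  \sum_v lam v * (al * (x v).1 + be * (x v).2 + ga).
Proof.
move=> H1.
rewrite -[ga]mul1r -{1}H1 !mulr_sumr mulr_suml -!big_split /=.
apply: eq_bigr => v _.
by rewrite !mulrDr mul1r [al * _]mulrCA [be * _]mulrCA.
Qed.
Local Open Scope nat_scope.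
Ltac natfin := repeat match goal with
  | H : is_true (leq _ _) |- _ => move/ssrnat.leP: H => H
  | H : is_true (_ != _) |- _ => move/eqP: H => H
  | H : is_true (_ == _) |- _ => move/eqP: H => H
  | |- is_true (leq _ _) => apply/ssrnat.leP
  | |- is_true (_ != _) => apply/eqP
  | |- _ /\ _ => split
  end; simpl in *; lia.

Definition prevk k i := if i == 0 then k.-1 else i.-1.

Lemma idx_facts k i : (3 <= k)%N -> (i < k)%N ->
  [/\ (prevk k i < k)%N, ((prevk k i).+1 %% k = i)%N,
      (i.+1 %% k < k)%N, (i.+1 %% k != i) /\
      (i.+1 %% k != prevk k i) & (prevk k i != i)].
Proof.
move=> Hk Hi.
have Hk0 : (0 < k)%N by apply: leq_trans Hk.
have -> : (i.+1 %% k = if i.+1 == k then 0 else i.+1)%N.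
  case: eqP => [->|/eqP Hne]; first by rewrite modnn.
  by rewrite modn_small // ltn_neqAle Hne Hi.
rewrite /prevk.
case: i Hi => [|i] Hi /=.
  rewrite prednK // modnn.
  case: eqP => H; split; natfin.
rewrite modn_small //.
case: eqP => H; split; natfin.
Qed.

Local Open Scope ring_scope.
Lemma orient_aba (R : numDomainType) (a b : R * R) : orient a b a = 0.
Proof. by rewrite /orient !subrr !mulr0 subrr. Qed.
Lemma orient_abb (R : numDomainType) (a b : R * R) : orient a b b = 0.
Proof. by rewrite /orient mulrC subrr. Qed.

Lemma corner_fun (R : realFieldType) (T : eqType) (C : seq T) (f : T -> R * R) u :
  convex_polygon_corners (map f C) -> u \in C ->
  exists al be ga : R,
   al * (f u).1 + be * (f u).2 + ga = 0 /\
   forall c, c \in C -> c != u -> 0 < al * (f c).1 + be * (f c).2 + ga.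
Proof.
case=> Hk Hun Hor Hu.
set k := size (map f C) in Hk Hor.
set p := fun i => nth (0, 0) (map f C) i in Hor.
have [s Hs] : exists s : R, forall i j, (i < k)%N -> (j < k)%N -> j != i ->
   j != (i.+1 %% k)%N -> 0 < s * orient (p i) (p (i.+1 %% k)%N) (p j).
  case: Hor => H; [exists 1 | exists (-1)] => i j Hi Hj H1 H2.
    by rewrite mul1r; apply: H.
  by rewrite mulN1r oppr_gt0; apply: H.
have Hkc : k = size C by rewrite /k size_map.
set i := index u C.
have Hi : (i < k)%N by rewrite Hkc index_mem.
have Hp : forall c, c \in C -> p (index c C) = f c.
  move=> c Hc; rewrite /p (nth_map c); last by rewrite index_mem.
  by rewrite nth_index.
have [Hm1 Hm2 Hi1 [Hn1 Hn2] Hn3] := @idx_facts k i Hk Hi.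
set i1 := (i.+1 %% k)%N in Hi1 Hn1 Hn2.
set im := prevk k i in Hm1 Hm2 Hn2 Hn3.
have [a1 [b1 [c1 E1]]] := @orient_aff _ (p i) (p i1).
have [a2 [b2 [c2 E2]]] := @orient_aff _ (p im) (p i).
have Eg : forall x, s * orient (p i) (p i1) x + s * orient (p im) (p i) x =
   (s * a1 + s * a2) * x.1 + (s * b1 + s * b2) * x.2 + (s * c1 + s * c2).
  move=> x; rewrite E1 E2 !mulrDr !mulrA addrACA.
  by congr (_ + _); rewrite !mulrDl addrACA.
exists (s * a1 + s * a2), (s * b1 + s * b2), (s * c1 + s * c2); split.
  rewrite -Eg -(Hp u Hu) orient_aba orient_abb.
  by rewrite mulr0 addr0.
move=> c Hc Hcu; rewrite -Eg -(Hp c Hc).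
set j := index c C.
have Hj : (j < k)%N by rewrite Hkc index_mem.
have Hji : j != i.
  apply: contra Hcu => /eqP Hji.
  by rewrite -(nth_index u Hc) -/j Hji nth_index.
have Hs2 : j != im -> 0 < s * orient (p im) (p i) (p j).
  move=> Hjm; have := Hs im j Hm1 Hj Hjm; rewrite Hm2; apply.
  exact: Hji.
case: (eqVneq j i1) => Hj1.
  rewrite Hj1 orient_abb mulr0 add0r -Hj1; apply: Hs2.
  by rewrite Hj1.
case: (eqVneq j im) => Hjm.
  rewrite Hjm orient_aba mulr0 addr0 -Hjm; exact: Hs.
apply: addr_gt0; [exact: Hs | exact: Hs2].
Qed.

Theorem lemma2p2 (R : realFieldType) (T : finType) (e : rel T) (C : seq T)
    (f : T -> R * R) :
  simple_graph e -> biconnected e -> simple_cycle e C ->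
  convex_combination_map e C f ->
  forall u v : T, u \in C -> v != u -> f v <> f u.
Proof.
move=> Hsg [Hcard [Hconn Hbic]] [HC3 HCu HCcyc] [Hcorn [lam [Hl0 Hlpos Hlsum Hlcomb]]].
move=> u v Hu Hvu Hfv.
have [al [be [ga [Hgu Hgc]]]] := @corner_fun R T C f u Hcorn Hu.
pose g := fun x => al * (f x).1 + be * (f x).2 + ga.
have Hgaff : forall w, w \notin C -> g w = \sum_y lam w y * g y.
  move=> w Hw; rewrite /g (Hlcomb w Hw) /=.
  by apply: aff_comb; apply: Hlsum.
have [w0 Hw0] : exists w0, forall y, g w0 <= g y.
  case: (@arg_minP _ R T u xpredT g isT) => w0 _ H.
  by exists w0 => y; apply: H.
pose e' := [rel x y | (x \notin C) && e x y].
have Hprop : forall x y, g x = g w0 -> e' x y -> g y = g w0.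
  move=> x y Hx /andP [HxC Hxy].
  have Hlxy : 0 < lam x y by apply/(Hlpos x y).
  apply/eqP; rewrite eq_le Hw0 andbT; apply: contraT; rewrite -ltNge => Hlt.
  have : \sum_z lam x z * g w0 < \sum_z lam x z * g z.
    rewrite (bigD1 y) //= [X in _ < X](bigD1 y) //=.
    apply: ltr_leD; first by rewrite ltr_pM2l.
    apply: ler_sum => z _; apply: ler_wpM2l => //; exact: Hw0.
  by rewrite -mulr_suml Hlsum // mul1r -Hgaff // Hx ltxx.
have Hconn' : forall x y, g x = g w0 -> connect e' x y -> g y = g w0.
  move=> x y Hx /connectP [p Hp ->].
  elim: p x Hx Hp => //= z p IH x Hx /andP [Hxz Hp].
  exact: IH (Hprop x z Hx Hxz) Hp.
have Hreach : forall p a, path e a p -> last a p \in C ->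
    exists y, [/\ y \in C, y \in a :: p & connect e' a y].
  elim=> [|b p IH] a /=.
    by move=> _ Ha; exists a; rewrite mem_head connect0.
  move=> /andP [Hab Hp] Hl.
  case: (boolP (a \in C)) => Ha.
    by exists a; rewrite mem_head connect0.
  have [y [Hy1 Hy2 Hy3]] := IH b Hp Hl.
  exists y; split => //; first by rewrite inE Hy2 orbT.
  apply: connect_trans Hy3; apply: connect1; by rewrite /= Ha Hab.
have HCge : forall y, y \in C -> 0 <= g y.
  move=> y Hy; case: (eqVneq y u) => [->|Hyu]; first by rewrite /g Hgu.
  by apply: ltW; apply: Hgc.
have Hm0 : 0 <= g w0.
  have /connectP [p Hp Hl] := Hconn w0 u.
  have Hl' : last w0 p \in C by rewrite -Hl.
  have [y [Hy1 _ Hy3]] := Hreach p w0 Hp Hl'.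
  by rewrite -(Hconn' w0 y erefl Hy3); apply: HCge.
have Hgv : g v = 0 by rewrite /g Hfv.
have Hgvw : g v = g w0.
  apply: le_anti; apply/andP; split; last exact: Hw0.
  by rewrite Hgv.
case: (boolP (v \in C)) => HvC.
  have H : 0 < g v := Hgc v HvC Hvu.
  by rewrite Hgv ltxx in H.
have [x Hx Hxu] : exists2 x, x \in C & x != u.
  case: C HC3 HCu {Hcorn Hlpos Hlsum Hlcomb Hgaff e' Hprop Hconn' Hreach HCge HvC
    Hgc Hu HCcyc} => [|a [|b C']] //= _ /andP [Hab _].
  case: (eqVneq a u) => [Hau|Hau]; last by exists a; rewrite ?mem_head.
  exists b; first by rewrite !inE eqxx orbT.
  by rewrite -Hau; apply: contra Hab => /eqP ->; rewrite mem_head.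
have /connectP [p Hp Hl] := Hbic u v x Hvu Hxu.
have Hall : all (fun z => z != u) (v :: p).
  elim: p v Hvu Hp {Hl Hgv Hgvw HvC Hfv} => [|b p IH] a Ha /=; first by rewrite Ha.
  move=> /andP [/and3P [_ _ Hb] Hp].
  by rewrite Ha /=; exact: (IH b Hb Hp).
have Hpe : path e v p.
  by apply: sub_path Hp => a b /and3P [].
have Hl' : last v p \in C by rewrite -Hl.
have [y [Hy1 Hy2 Hy3]] := Hreach p v Hpe Hl'.
have Hyu : y != u by move/allP: Hall; apply.
have H : 0 < g y := Hgc y Hy1 Hyu; move: H.
by rewrite [g y](Hconn' v y Hgvw Hy3) -Hgvw Hgv ltxx.
Qed.
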